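(* Let $\delta:\mathcal{B}\to B$ be any derivation with Fourier components $\delta_n$. Then for every $b\in\mathcal{B}$ and every finitely supported $x\in c_{00}(\mathbb{Z})\subseteq\ell^2(\mathbb{Z})$, the series $\sum_{n\in\mathbb{Z}}\delta_n(b)x$ converges in $\ell^2(\mathbb{Z})$ and equals $\delta(b)x$.
   Context: Setup: $G$ is an infinite compact (Hausdorff) abelian group, written additively, and $x_1\in G$ generates a dense cyclic subgroup; $x_n=nx_1$. $\widehat G$ is the group of continuous characters. Let $H=\ell^2(\mathbb{Z})$ with canonical basis $\{E_l\}$; $VE_l=E_{l+1}$, $M_fE_l=f(x_l)E_l$, $\mathbb{L}E_l=lE_l$. $B=C^*(V,M_f:f\in C(G))$, $\mathcal{B}$ is the $*$-subalgebra generated by $V,V^{-1},M_\chi$ ($\chi\in\widehat G$). For $\theta\in\mathbb{R}$, $\rho_\theta(b)=e^{i\theta\mathbb{L}}be^{-i\theta\mathbb{L}}$. The $n$-th Fourier component of a derivation $\delta:\mathcal B\to B$ is $\delta_n(b)=\frac{1}{2\pi}\int_0^{2\pi}e^{in\theta}\rho_\theta^{-1}\big(\delta(\rho_\theta(b))\big)\,d\theta$. *)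

(* Defs.v *)
From HB Require Import structures.
From mathcomp Require Import all_boot all_order all_algebra.
From mathcomp Require Import all_classical all_reals all_analysis.
From mathcomp Require Import complex.
Set Implicit Arguments. Unset Strict Implicit. Unset Printing Implicit Defensive.
Import Order.TTheory GRing.Theory Num.Theory.
Import numFieldNormedType.Exports.
Local Open Scope classical_set_scope.
Local Open Scope ring_scope.

Section Defs.
Variable R : realType.

Definition Cx := R[i].
Definition sqmod (z : Cx) : R := complex.Re z ^+ 2 + complex.Im z ^+ 2.
Definition expi (t : R) : Cx := Complex (cos t) (sin t).

Definition Vec := int -> Cx.
Definition sqn (x : Vec) : \bar R := (\esum_(k in [set: int]) (sqmod (x k))%:E)%E.
Definition inl2 (x : Vec) : Prop := (sqn x < +oo)%E.

(* operators on l2(Z): only their restriction to l2 vectors matters *)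
Definition Op := Vec -> Vec.
Definition op_eq (S T : Op) : Prop := forall x, inl2 x -> S x = T x.
Definition opadd (S T : Op) : Op := fun x k => S x k + T x k.
Definition opscale (c : Cx) (S : Op) : Op := fun x k => c * S x k.
Definition opmul (S T : Op) : Op := fun x => S (T x).

Definition bounded_op (T : Op) : Prop :=
  [/\ forall x, inl2 x -> inl2 (T x),
      forall (c : Cx) x y, inl2 x -> inl2 y ->
        T (fun k => c * x k + y k) = (fun k => c * T x k + T y k)
    & exists M : R, forall x, inl2 x -> (sqn (T x) <= M%:E * sqn x)%E].

(* V E_l = E_{l+1}, its inverse, diagonal operators *)
Definition shiftV : Op := fun x l => x (l - 1).
Definition shiftVinv : Op := fun x l => x (l + 1).
Definition diagop (g : int -> Cx) : Op := fun x l => g l * x l.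
Definition Uth (t : R) : Op := diagop (fun l => expi (l%:~R * t)).
Definition rho (t : R) (T : Op) : Op := opmul (Uth t) (opmul T (Uth (- t))).
Definition rho_inv (t : R) (T : Op) : Op := opmul (Uth (- t)) (opmul T (Uth t)).

Inductive gen_alg (S : set Op) : Op -> Prop :=
| ga_base T : S T -> gen_alg S T
| ga_add A B : gen_alg S A -> gen_alg S B -> gen_alg S (opadd A B)
| ga_scale c A : gen_alg S A -> gen_alg S (opscale c A)
| ga_mul A B : gen_alg S A -> gen_alg S B -> gen_alg S (opmul A B)
| ga_ext A B : gen_alg S A -> op_eq A B -> gen_alg S B.

Definition cint (f : R -> Cx) : Cx :=
  Complex (Rintegral (@lebesgue_measure R) `[0, 2 * pi]%classic (fun t => complex.Re (f t)))
          (Rintegral (@lebesgue_measure R) `[0, 2 * pi]%classic (fun t => complex.Im (f t))).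

Variable G : topologicalZmodType.
Variable x1 : G.

Definition continuousC (f : G -> Cx) : Prop :=
  continuous (fun g => complex.Re (f g)) /\ continuous (fun g => complex.Im (f g)).
Definition character (chi : G -> Cx) : Prop :=
  [/\ continuousC chi, forall a b, chi (a + b) = chi a * chi b
    & forall a, sqmod (chi a) = 1].

Definition Mop (f : G -> Cx) : Op := diagop (fun l => f (x1 *~ l)).

Definition calB_gens : set Op :=
  [set T | T = shiftV \/ T = shiftVinv \/ exists chi, character chi /\ T = Mop chi].
Definition B_gens : set Op :=
  [set T | T = shiftV \/ T = shiftVinv \/ exists f, continuousC f /\ T = Mop f].
Definition in_calB : set Op := gen_alg calB_gens.
(* B = C*(V, M_f) = operator-norm closure of the *-algebra generated *)
Definition in_B (T : Op) : Prop :=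
  bounded_op T /\ forall eps : R, 0 < eps -> exists P, gen_alg B_gens P /\
    forall x, inl2 x -> (sqn (fun k => (T x k - P x k)%R) <= (eps ^+ 2)%:E * sqn x)%E.

Definition derivation (d : Op -> Op) : Prop :=
  [/\ forall a b, in_calB a -> op_eq a b -> op_eq (d a) (d b),
      forall a, in_calB a -> in_B (d a),
      forall a b, in_calB a -> in_calB b -> op_eq (d (opadd a b)) (opadd (d a) (d b)),
      forall c a, in_calB a -> op_eq (d (opscale c a)) (opscale c (d a))
    & forall a b, in_calB a -> in_calB b ->
        op_eq (d (opmul a b)) (opadd (opmul a (d b)) (opmul (d a) b))].

Definition fourier (d : Op -> Op) (n : int) (b : Op) : Op := fun x k =>
  Complex ((2 * pi)^-1) 0 * cint (fun t => expi (n%:~R * t) * rho_inv t (d (rho t b)) x k).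

End Defs.

(* Main.v *)
Require Import Defs.
From HB Require Import structures.
From mathcomp Require Import all_boot all_order all_algebra.
From mathcomp Require Import all_classical all_reals all_analysis.
From mathcomp Require Import complex.
From mathcomp Require Import ring lra zify.
Import Order.TTheory GRing.Theory Num.Theory.
Import numFieldNormedType.Exports.
Local Open Scope classical_set_scope.
Local Open Scope ring_scope.
Set Implicit Arguments. Unset Strict Implicit. Unset Printing Implicit Defensive.
Section A.
Variable R : realType.
Local Notation Re := (@complex.Re R).
Local Notation Im := (@complex.Im R).

Lemma ReM (x y : Cx R) : Re (x * y) = Re x * Re y - Im x * Im y.
Proof. by case: x => ? ?; case: y => ? ?. Qed.
Lemma ImM (x y : Cx R) : Im (x * y) = Re x * Im y + Im x * Re y.
Proof. by case: x => ? ?; case: y => ? ?. Qed.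
Lemma ReD (x y : Cx R) : Re (x + y) = Re x + Re y.
Proof. by case: x => ? ?; case: y => ? ?. Qed.
Lemma ImD (x y : Cx R) : Im (x + y) = Im x + Im y.
Proof. by case: x => ? ?; case: y => ? ?. Qed.

Lemma sqmod_ge0 (z : Cx R) : 0 <= sqmod z.
Proof. by rewrite /sqmod addr_ge0 // sqr_ge0. Qed.
Lemma sqmodM (a b : Cx R) : sqmod (a * b) = sqmod a * sqmod b.
Proof. rewrite /sqmod ReM ImM; ring. Qed.
Lemma sqmodD (a b : Cx R) : sqmod (a + b) <= 2 * sqmod a + 2 * sqmod b.
Proof. rewrite /sqmod ReD ImD. have := sqr_ge0 (Re a - Re b); have := sqr_ge0 (Im a - Im b). rewrite !expr2. nra. Qed.
Lemma sqmod0 : sqmod (0 : Cx R) = 0.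
Proof. by rewrite /sqmod /= expr0n /= addr0. Qed.

Lemma expi0 : expi (0 : R) = 1.
Proof. by rewrite /expi cos0 sin0. Qed.
Lemma expiD (a b : R) : expi (a + b) = expi a * expi b.
Proof. by rewrite /expi cosD sinD; apply/eqP; rewrite eq_complex /= !eqxx /= addrC eqxx. Qed.
Lemma expiN (a : R) : expi (- a) * expi a = 1.
Proof. by rewrite -expiD addNr expi0. Qed.
Lemma expiNr (a : R) : expi a * expi (- a) = 1.
Proof. by rewrite -expiD addrN expi0. Qed.
Lemma sqmod_expi (a : R) : sqmod (expi a) = 1.
Proof. by rewrite /sqmod /= cos2Dsin2. Qed.
End A.
Section B.
Variable R : realType.
Local Open Scope ereal_scope.

Lemma esumZ (T : choiceType) (S : set T) (c : R) (a : T -> \bar R) :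
  (0 <= c)%R -> (forall i, 0 <= a i) ->
  \esum_(i in S) (c%:E * a i) = c%:E * \esum_(i in S) a i.
Proof.
move=> c0 a0; rewrite /esum -ereal_supZl //; last first.
  by apply/set0P; exists 0; exists set0; [exact: fsets_set0|rewrite fsbig_set0].
congr ereal_sup; apply/seteqP; split => y /=.
  by move=> [A hA <-]; exists (\sum_(x \in A) a x); [exists A|rewrite ge0_mule_fsumr].
by move=> [z [A hA <-] <-]; exists A => //; rewrite ge0_mule_fsumr.
Qed.

Lemma sqn_ge0 (x : Vec R) : 0 <= sqn x.
Proof. by apply: esum_ge0 => k _; rewrite lee_fin sqmod_ge0. Qed.

Lemma le_sqn (x y : Vec R) : (forall k, (sqmod (x k) <= sqmod (y k))%R) -> sqn x <= sqn y.
Proof. by move=> h; apply: le_esum => k _; rewrite lee_fin. Qed.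

Lemma sqn_scale (c : Cx R) (x : Vec R) : sqn (fun k => c * x k)%R = (sqmod c)%:E * sqn x.
Proof.
rewrite /sqn -esumZ ?sqmod_ge0 //; last by move=> i; rewrite lee_fin sqmod_ge0.
by apply: eq_esum => k _; rewrite sqmodM.
Qed.

Lemma sqn_add (x y : Vec R) : sqn (fun k => x k + y k)%R <= 2%:E * sqn x + 2%:E * sqn y.
Proof.
rewrite /sqn -!esumZ //; try by move=> i; rewrite lee_fin sqmod_ge0.
rewrite -esumD; try by move=> i _; rewrite mule_ge0 // lee_fin sqmod_ge0.
by apply: le_esum => k _; rewrite -!EFinM -EFinD lee_fin sqmodD.
Qed.

Lemma inl2_add (x y : Vec R) : inl2 x -> inl2 y -> inl2 (fun k => x k + y k)%R.
Proof.
rewrite /inl2 => hx hy; apply: le_lt_trans (sqn_add x y) _.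
by rewrite lte_add_pinfty // lte_mul_pinfty.
Qed.

Lemma inl2_scale (c : Cx R) (x : Vec R) : inl2 x -> inl2 (fun k => c * x k)%R.
Proof. by rewrite /inl2 sqn_scale => h; rewrite lte_mul_pinfty // lee_fin sqmod_ge0. Qed.

Lemma inl2_le (x y : Vec R) : (forall k, (sqmod (x k) <= sqmod (y k))%R) -> inl2 y -> inl2 x.
Proof. by move=> h; rewrite /inl2 => hy; apply: le_lt_trans (le_sqn h) hy. Qed.

Lemma inl2_finsupp (x : Vec R) (s : seq int) : (forall k, k \notin s -> x k = 0%R) -> inl2 x.
Proof.
move=> h; rewrite /inl2 /sqn.
rewrite (_ : \esum_(k in [set: int]) _ = \esum_(k in [set` s]) (sqmod (x k))%:E); last first.
  rewrite [RHS]esum_mkcond; apply: eq_esum => k _.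
  case: ifP => // /negbT hk; rewrite h ?sqmod0 //; apply: contra hk => ks; by rewrite mem_setE.
rewrite esum_fset //; last by move=> i _; rewrite lee_fin sqmod_ge0.
2: exact: (finite_seq s).
rewrite fsumEFin ?ltry //; exact: (finite_seq s).
Qed.

Lemma esum_tail (u : int -> R) : (forall k, 0 <= u k)%R ->
  \esum_(k in [set: int]) (u k)%:E < +oo -> forall e : R, (0 < e)%R ->
  exists s : seq int, forall w : int -> R, (forall k, 0 <= w k <= u k)%R ->
    (forall k, k \in s -> w k = 0%R) -> \esum_(k in [set: int]) (w k)%:E <= e%:E.
Proof.
move=> u0 ufin e e0.
have Sfin : \esum_(k in [set: int]) (u k)%:E \is a fin_num.
  by rewrite ge0_fin_numE // esum_ge0 // => k _; rewrite lee_fin.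
set S := \esum_(k in [set: int]) (u k)%:E in Sfin.
have : S - e%:E < S by rewrite lteBlDr // lteDl // lte_fin.
rewrite {2}/S /esum => /ereal_sup_gt [y [A [finA _] <-]] hA.
case/finite_seqP: (finA) => s Aeq; exists s => w w0 ws.
rewrite /esum; apply: ge_ereal_sup => _ [X [finX _] <-].
rewrite (fsbigID A) //.
rewrite fsbig1 ?add0e; last by move=> k [_ Ak]; rewrite ws //; move: Ak; rewrite Aeq.
have finXA : finite_set (X `&` ~` A) by apply: finite_setIl.
have h1 : \sum_(i \in X `&` ~` A) (w i)%:E <= \sum_(i \in X `&` ~` A) (u i)%:E.
  by apply: lee_fsum => // i _; rewrite lee_fin; case/andP: (w0 i).
change (0 + \sum_(i \in X `&` ~` A) (w i)%:E <= e%:E); rewrite add0e.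
apply: le_trans h1 _.
have h2 : \sum_(i \in (X `&` ~` A) `|` A) (u i)%:E <= S.
  apply: esum_ge; exists ((X `&` ~` A) `|` A) => //; split => //.
  by rewrite finite_setU.
rewrite fsbigU0 // in h2; last by move=> i [[_ nA] Ai].
rewrite -(@leeD2rE _ (\sum_(i \in A) (u i)%:E)); last by rewrite fsumEFin.
apply: le_trans h2 _.
rewrite lteBlDr // in hA.
by rewrite addeC; exact: ltW.
Qed.
End B.
Section D.
Variable R : realType.
Local Notation Re := (@complex.Re R).
Local Notation Im := (@complex.Im R).
Local Notation mu := (@lebesgue_measure R).

Lemma cont_lin (a : R) : continuous (fun t : R => a * t).
Proof. by move=> x; apply: cvgM; [exact: cvg_cst | exact: cvg_id]. Qed.

Lemma cont_cos_lin (a : R) : continuous (fun t : R => cos (a * t)).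
Proof. move=> x; apply: continuous_comp; [exact: cont_lin | exact: continuous_cos]. Qed.
Lemma cont_sin_lin (a : R) : continuous (fun t : R => sin (a * t)).
Proof. move=> x; apply: continuous_comp; [exact: cont_lin | exact: continuous_sin]. Qed.

Lemma derivable_lin (g : R -> R) (a x : R) : derivable g (a * x) 1 ->
  derivable (fun t => g (a * t)) x 1.
Proof.
move=> /derivable1_diffP dg; apply/derivable1_diffP.
have dl : differentiable (fun t : R => a * t) x.
  apply/derivable1_diffP; exact: derivableM.
exact: (differentiable_comp dl dg).
Qed.

Lemma derive_lin (g : R -> R) (a x : R) : derivable g (a * x) 1 ->
  (fun t => g (a * t))^`()%classic x = g^`()%classic (a * x) * a.
Proof.
move=> dg.
have dl : derivable (fun t : R => a * t) x 1 by exact: derivableM.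
have := derive1_comp dl dg; rewrite /comp => ->.
by rewrite derive1Ml // derive1_id mulr1.
Qed.

Lemma Rint_FTC (F f : R -> R) : continuous f -> (forall x, derivable F x 1) ->
  (forall x, F^`()%classic x = f x) -> continuous F ->
  Rintegral mu `[0, 2 * pi]%classic f = F (2 * pi) - F 0.
Proof.
move=> cf dF F'f cF.
have pi0 : (0 < 2 * pi :> R) by rewrite mulr_gt0 // pi_gt0.
rewrite /Rintegral (@continuous_FTC2 _ f F) //.
- exact: continuous_subspaceT.
- split.
  + by move=> x _; exact: dF.
  + by apply: cvg_at_right_filter; exact: cF.
  + by apply: cvg_at_left_filter; exact: cF.
Qed.
End D.
Section D2.
Variable R : realType.
Local Notation Re := (@complex.Re R).
Local Notation Im := (@complex.Im R).
Local Notation mu := (@lebesgue_measure R).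

Lemma sincos_nat2pi (n : nat) : sin (n%:R * (2 * pi)) = 0 :> R /\ cos (n%:R * (2 * pi)) = 1 :> R.
Proof.
elim: n => [|n [IHs IHc]]; first by rewrite mul0r sin0 cos0.
have -> : n.+1%:R * (2 * pi) = n%:R * (2 * pi) + pi *+ 2 :> R.
  by rewrite -addn1 natrD mulrDl mul1r mulr2n mulrDl mul1r.
by rewrite sinD2pi cosD2pi.
Qed.

Lemma sincos_int2pi (m : int) : sin (m%:~R * (2 * pi)) = 0 :> R /\ cos (m%:~R * (2 * pi)) = 1 :> R.
Proof.
case: m => n; first by rewrite -pmulrn; exact: sincos_nat2pi.
rewrite NegzE mulrNz mulNr sinN cosN -pmulrn.
by have [-> ->] := sincos_nat2pi n.+1; rewrite oppr0.
Qed.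

Lemma cont_scale (c : R) (g : R -> R) : continuous g -> continuous (fun t => c * g t).
Proof. by move=> cg x; apply: cvgM; [exact: cvg_cst | exact: cg]. Qed.

Lemma dsin (y : R) : sin^`()%classic y = cos y.
Proof. by rewrite derive1E derive_val. Qed.
Lemma dcos (y : R) : cos^`()%classic y = - sin y.
Proof. by rewrite derive1E derive_val. Qed.

Lemma int_cos (m : int) : m != 0 ->
  Rintegral mu `[0, 2 * pi]%classic (fun t => cos (m%:~R * t)) = 0.
Proof.
move=> m0; have mR : (m%:~R : R) != 0 by rewrite intr_eq0.
rewrite (@Rint_FTC _ (fun t => (m%:~R)^-1 * sin (m%:~R * t))).
- by rewrite mulr0 sin0 mulr0 (sincos_int2pi m).1 mulr0 subr0.
- exact: cont_cos_lin.
- by move=> x; apply: derivableM => //; apply: derivable_lin; exact: derivable_sin.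
- move=> x; rewrite derive1Ml; last by apply: derivable_lin; exact: derivable_sin.
  rewrite derive_lin ?dsin; last exact: derivable_sin.
  by rewrite mulrCA mulVf // mulr1.
- by apply: cont_scale; exact: cont_sin_lin.
Qed.

Lemma int_sin (m : int) : m != 0 ->
  Rintegral mu `[0, 2 * pi]%classic (fun t => sin (m%:~R * t)) = 0.
Proof.
move=> m0; have mR : (m%:~R : R) != 0 by rewrite intr_eq0.
rewrite (@Rint_FTC _ (fun t => (- (m%:~R)^-1) * cos (m%:~R * t))).
- by rewrite mulr0 cos0 (sincos_int2pi m).2 subrr.
- exact: cont_sin_lin.
- by move=> x; apply: derivableM => //; apply: derivable_lin; exact: derivable_cos.
- move=> x; rewrite derive1Ml; last by apply: derivable_lin; exact: derivable_cos.
  rewrite derive_lin ?dcos; last exact: derivable_cos.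
  by rewrite !mulNr mulrN opprK mulrCA mulVf // mulr1.
- by apply: cont_scale; exact: cont_cos_lin.
Qed.
End D2.
Section D3.
Variable R : realType.
Local Notation Re := (@complex.Re R).
Local Notation Im := (@complex.Im R).
Local Notation mu := (@lebesgue_measure R).

Definition contC (f : R -> Cx R) :=
  continuous (fun t => Re (f t)) /\ continuous (fun t => Im (f t)).

Lemma intg (g : R -> R) : continuous g -> mu.-integrable `[0, 2 * pi]%classic (EFin \o g).
Proof.
move=> cg; apply: continuous_compact_integrable; first exact: segment_compact.
exact: continuous_subspaceT.
Qed.

Lemma contC_add (f g : R -> Cx R) : contC f -> contC g -> contC (fun t => f t + g t).
Proof.
move=> [f1 f2] [g1 g2]; split.
  rewrite (_ : (fun t => _) = (fun t => Re (f t) + Re (g t))); last by apply/funext => t; rewrite ReD.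
  by move=> x; apply: cvgD; [exact: f1 | exact: g1].
rewrite (_ : (fun t => _) = (fun t => Im (f t) + Im (g t))); last by apply/funext => t; rewrite ImD.
by move=> x; apply: cvgD; [exact: f2 | exact: g2].
Qed.

Lemma contC_scale (c : Cx R) (g : R -> Cx R) : contC g -> contC (fun t => c * g t).
Proof.
move=> [g1 g2]; split.
  rewrite (_ : (fun t => _) = (fun t => Re c * Re (g t) - Im c * Im (g t))); last by apply/funext => t; rewrite ReM.
  by move=> x; apply: cvgB; apply: cont_scale.
rewrite (_ : (fun t => _) = (fun t => Re c * Im (g t) + Im c * Re (g t))); last by apply/funext => t; rewrite ImM.
by move=> x; apply: cvgD; apply: cont_scale.
Qed.

Lemma contC_expi (a : R) : contC (fun t => expi (a * t)).
Proof. split; [exact: cont_cos_lin | exact: cont_sin_lin]. Qed.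

Lemma contC0 : contC (fun _ => 0).
Proof. by split => x; exact: cvg_cst. Qed.

Lemma cint_add (f g : R -> Cx R) : contC f -> contC g ->
  cint (fun t => f t + g t) = cint f + cint g.
Proof.
move=> [f1 f2] [g1 g2]; rewrite /cint.
rewrite (_ : (fun t => Re (f t + g t)) = (fun t => Re (f t) + Re (g t))); last by apply/funext => t; rewrite ReD.
rewrite (_ : (fun t => Im (f t + g t)) = (fun t => Im (f t) + Im (g t))); last by apply/funext => t; rewrite ImD.
by rewrite !RintegralD //; apply: intg.
Qed.

Lemma cint_scale (c : Cx R) (g : R -> Cx R) : contC g ->
  cint (fun t => c * g t) = c * cint g.
Proof.
move=> [g1 g2]; rewrite /cint.
rewrite (_ : (fun t => Re (c * g t)) = (fun t => Re c * Re (g t) - Im c * Im (g t))); last by apply/funext => t; rewrite ReM.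
rewrite (_ : (fun t => Im (c * g t)) = (fun t => Re c * Im (g t) + Im c * Re (g t))); last by apply/funext => t; rewrite ImM.
rewrite RintegralB //; try by apply: intg; apply: cont_scale.
rewrite RintegralD //; try by apply: intg; apply: cont_scale.
rewrite !RintegralZl //; try by apply: intg.
by case: c.
Qed.

Lemma cint0 : cint (fun _ : R => 0 : Cx R) = 0.
Proof.
rewrite /cint /= Rintegral_cst //= mul0r.
by apply/eqP; rewrite eq_complex /= !eqxx.
Qed.

Lemma cint_expi (m : int) :
  cint (fun t => expi (m%:~R * t)) = if m == 0 then (Complex (2 * pi) 0 : Cx R) else 0.
Proof.
case: eqP => [->|/eqP m0].
  rewrite /cint /=.
  rewrite (_ : (fun t : R => cos (0%:~R * t)) = fun=> 1); last by apply/funext => t; rewrite mul0r cos0.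
  rewrite (_ : (fun t : R => sin (0%:~R * t)) = fun=> 0); last by apply/funext => t; rewrite mul0r sin0.
  rewrite !Rintegral_cst //= mul0r mul1r lebesgue_measure_itv /= lte_fin mulr_gt0 ?pi_gt0 //=.
  by rewrite subr0.
by rewrite /cint /= int_cos // int_sin.
Qed.

Lemma cint_sum (I : Type) (r : seq I) (c : I -> Cx R) (a : I -> int) :
  cint (fun t => \sum_(i <- r) c i * expi ((a i)%:~R * t)) =
  \sum_(i <- r) c i * cint (fun t => expi ((a i)%:~R * t)).
Proof.
have cs : forall r', contC (fun t => \sum_(i <- r') c i * expi ((a i)%:~R * t)).
  elim => [|i r' IH].
    have -> : (fun t => \sum_(i <- [::]) c i * expi ((a i)%:~R * t)) = fun=> 0.
      by apply/funext => t; rewrite big_nil.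
    exact: contC0.
  rewrite (_ : (fun t => _) = (fun t => c i * expi ((a i)%:~R * t) + \sum_(j <- r') c j * expi ((a j)%:~R * t))); last by apply/funext => t; rewrite big_cons.
  by apply: contC_add => //; apply: contC_scale; exact: contC_expi.
elim: r => [|i r IH].
  have -> : (fun t => \sum_(i <- [::]) c i * expi ((a i)%:~R * t)) = fun=> 0.
    by apply/funext => t; rewrite big_nil.
  by rewrite big_nil cint0.
rewrite big_cons -IH.
rewrite (_ : (fun t => _) = (fun t => c i * expi ((a i)%:~R * t) + \sum_(j <- r) c j * expi ((a j)%:~R * t))); last by apply/funext => t; rewrite big_cons.
rewrite cint_add //; last by apply: contC_scale; exact: contC_expi.
by rewrite cint_scale //; exact: contC_expi.
Qed.
End D3.
Section C.
Variable R : realType.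

Definition linl2 (T : Op R) := forall (c : Cx R) x y, inl2 x -> inl2 y ->
  T (fun k => c * x k + y k) = (fun k => c * T x k + T y k).
Definition good (T : Op R) := (forall x, inl2 x -> inl2 (T x)) /\ linl2 T.

Lemma inl2_0 : inl2 (fun _ : int => 0 : Cx R).
Proof. by apply: (@inl2_finsupp _ _ [::]). Qed.

Lemma good_T0 T : good T -> T (fun _ => 0) = (fun _ => 0).
Proof.
move=> [_ hl]; have := hl 1 _ _ inl2_0 inl2_0.
rewrite (_ : (fun k : int => 1 * 0 + 0) = fun _ => 0 : Cx R); last by apply/funext => k; rewrite mulr0 addr0.
move=> h; apply/funext => k; have := congr1 (fun f => f k) h => /= /(congr1 (fun z => z - T (fun _ => 0) k)).
by rewrite mul1r subrr addrK.
Qed.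

Lemma lin_add T x y : good T -> inl2 x -> inl2 y ->
  T (fun k => x k + y k) = fun k => T x k + T y k.
Proof.
move=> [_ hl] hx hy; have := hl 1 _ _ hx hy.
rewrite (_ : (fun k : int => 1 * x k + y k) = fun k => x k + y k); last by apply/funext => k; rewrite mul1r.
by move=> ->; apply/funext => k; rewrite mul1r.
Qed.

Lemma lin_scale T c x : good T -> inl2 x ->
  T (fun k => c * x k) = fun k => c * T x k.
Proof.
move=> gT hx; have := gT.2 c _ _ hx inl2_0.
rewrite (_ : (fun k : int => c * x k + 0) = fun k => c * x k); last by apply/funext => k; rewrite addr0.
by move=> ->; apply/funext => k; rewrite good_T0 // addr0.
Qed.

Lemma inl2_big (I : Type) (r : seq I) (c : I -> Cx R) (y : I -> Vec R) :
  (forall i, List.In i r -> inl2 (y i)) -> inl2 (fun k => \sum_(i <- r) c i * y i k).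
Proof.
elim: r => [|i r IH] hy.
  rewrite (_ : (fun k => _) = fun _ => 0); first exact: inl2_0.
  by apply/funext => k; rewrite big_nil.
rewrite (_ : (fun k => _) = fun k => c i * y i k + \sum_(j <- r) c j * y j k).
  apply: inl2_add; first by apply: inl2_scale; apply: hy; left.
  by apply: IH => j hj; apply: hy; right.
by apply/funext => k; rewrite big_cons.
Qed.

Lemma lin_big T (I : Type) (r : seq I) (c : I -> Cx R) (y : I -> Vec R) :
  good T -> (forall i, List.In i r -> inl2 (y i)) ->
  T (fun k => \sum_(i <- r) c i * y i k) = fun k => \sum_(i <- r) c i * T (y i) k.
Proof.
move=> gT; elim: r => [|i r IH] hy.
  rewrite (_ : (fun k => _) = fun _ => 0); last by apply/funext => k; rewrite big_nil.
  by rewrite good_T0 //; apply/funext => k; rewrite big_nil.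
rewrite (_ : (fun k => _) = fun k => c i * y i k + \sum_(j <- r) c j * y j k); last first.
  by apply/funext => k; rewrite big_cons.
have hr : forall j, List.In j r -> inl2 (y j) by move=> j hj; apply: hy; right.
rewrite gT.2 //; [|by apply: hy; left|exact: inl2_big].
by rewrite IH //; apply/funext => k; rewrite big_cons.
Qed.

Lemma good_diag (g : int -> Cx R) : (forall l, sqmod (g l) = 1) -> good (diagop g).
Proof.
move=> hg; split.
  move=> x hx; apply: inl2_le hx => k; rewrite /diagop sqmodM hg mul1r //.
move=> c x y hx hy; apply/funext => k; rewrite /diagop; ring.
Qed.

Lemma sqn_shift (x : Vec R) (a : int) : sqn (fun k => x (k + a)) = sqn x.
Proof.
rewrite /sqn [RHS](@reindex_esum _ _ _ setT setT (fun k => k + a)) //.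

rewrite setTT_bijective; exists (fun k => k - a) => k; by rewrite ?addrK ?subrK.
Qed.

Lemma good_shiftV : good (@shiftV R).
Proof.
split; first by move=> x hx; rewrite /inl2 /shiftV (sqn_shift x (-1)).
by move=> c x y _ _; apply/funext.
Qed.

Lemma good_shiftVinv : good (@shiftVinv R).
Proof.
split; first by move=> x hx; rewrite /inl2 /shiftVinv (sqn_shift x 1).
by move=> c x y _ _; apply/funext.
Qed.

Lemma good_add A B : good A -> good B -> good (opadd A B).
Proof.
move=> gA gB; split.
  by move=> x hx; apply: inl2_add; [apply: gA.1 | apply: gB.1].
move=> c x y hx hy; rewrite /opadd gA.2 // gB.2 //; apply/funext => k /=; ring.
Qed.

Lemma good_scale c A : good A -> good (opscale c A).
Proof.
move=> gA; split; first by move=> x hx; apply: inl2_scale; apply: gA.1.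
move=> c' x y hx hy; rewrite /opscale gA.2 //; apply/funext => k /=; ring.
Qed.

Lemma good_mul A B : good A -> good B -> good (opmul A B).
Proof.
move=> gA gB; split; first by move=> x hx; apply: gA.1; apply: gB.1.
move=> c x y hx hy; rewrite /opmul gB.2 // gA.2 //; [exact: gB.1 | exact: gB.1].
Qed.

Lemma good_ext A B : good A -> op_eq A B -> good B.
Proof.
move=> gA eAB; split; first by move=> x hx; rewrite -eAB //; apply: gA.1.
move=> c x y hx hy; rewrite -eAB; last by apply: inl2_add => //; apply: inl2_scale.
by rewrite gA.2 // -eAB // -eAB.
Qed.

Lemma good_Uth t : good (Uth t).
Proof. by apply: good_diag => l; rewrite sqmod_expi. Qed.

End C.
Section C2.
Variable R : realType.
Variable G : topologicalZmodType.
Variable x1 : G.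

Lemma calB_good (T : Op R) : in_calB x1 T -> good T.
Proof.
rewrite /in_calB => h; elim: h => {T} [T hT|A B _ gA _ gB|c A _ gA|A B _ gA _ gB|A B _ gA eAB].
- case: hT => [->|[->|[chi [[_ _ hchi] ->]]]]; [exact: good_shiftV|exact: good_shiftVinv|].
  by apply: good_diag => l; exact: hchi.
- exact: good_add.
- exact: good_scale.
- exact: good_mul.
- exact: good_ext gA eAB.
Qed.

Lemma calB_zero : in_calB x1 (fun (x : Vec R) (k : int) => 0).
Proof.
apply: (@ga_ext _ _ (opscale 0 (@shiftV R))).
- by apply: ga_scale; apply: ga_base; left.
- by move=> x _; apply/funext => k; rewrite /opscale mul0r.
Qed.

Definition opsum (s : seq (int * Op R)) (t : R) : Op R :=
  fun x k => \sum_(p <- s) expi (p.1%:~R * t) * p.2 x k.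
Definition allIn (s : seq (int * Op R)) := forall p, List.In p s -> in_calB x1 p.2.

Lemma opsum_nil t : opsum [::] t = fun x k => 0.
Proof. by apply/funext => x; apply/funext => k; rewrite /opsum big_nil. Qed.

Lemma opsum_cons p s t : opsum (p :: s) t = opadd (opscale (expi (p.1%:~R * t)) p.2) (opsum s t).
Proof. by apply/funext => x; apply/funext => k; rewrite /opsum big_cons. Qed.

Lemma opsum_cat s1 s2 t : opsum (s1 ++ s2) t = opadd (opsum s1 t) (opsum s2 t).
Proof. by apply/funext => x; apply/funext => k; rewrite /opsum big_cat. Qed.

Lemma calB_opsum s t : allIn s -> in_calB x1 (opsum s t).
Proof.
elim: s => [|p s IH] hs; first by rewrite opsum_nil; exact: calB_zero.
rewrite opsum_cons; apply: ga_add.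
  by apply: ga_scale; apply: hs; left.
by apply: IH => q hq; apply: hs; right.
Qed.

Lemma In_cat (T : Type) (p : T) s1 s2 : List.In p (s1 ++ s2) -> List.In p s1 \/ List.In p s2.
Proof. by elim: s1 => [|q s1 IH] /=; [right | case=> [->|/IH [h|h]]; [left; left|left; right|right]]. Qed.

Lemma In_map (T U : Type) (f : T -> U) (p : U) s : List.In p [seq f q | q <- s] ->
  exists q, List.In q s /\ p = f q.
Proof.
elim: s => [|q s IH] //= [<-|/IH [q' [h ->]]]; first by exists q; split => //; left.
by exists q'; split => //; right.
Qed.

Fixpoint mulpairs (s1 s2 : seq (int * Op R)) : seq (int * Op R) :=
  if s1 is p :: s1' then [seq (p.1 + q.1, opmul p.2 q.2) | q <- s2] ++ mulpairs s1' s2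
  else [::].

Lemma allIn_mulpairs s1 s2 : allIn s1 -> allIn s2 -> allIn (mulpairs s1 s2).
Proof.
elim: s1 => [|p s1 IH] h1 h2 q //= hq0; case: (In_cat hq0) => hq.
  case: (In_map hq) => q' [hq' ->].
  by apply: ga_mul; [apply: h1; left | apply: h2].
by apply: IH => // r hr; apply: h1; right.
Qed.

Lemma rho_add t (A B : Op R) : rho t (opadd A B) = opadd (rho t A) (rho t B).
Proof. by apply/funext => x; apply/funext => l; rewrite /rho /opmul /opadd /Uth /diagop mulrDr. Qed.

Lemma rho_scale t c (A : Op R) : rho t (opscale c A) = opscale c (rho t A).
Proof. by apply/funext => x; apply/funext => l; rewrite /rho /opmul /opscale /Uth /diagop mulrCA. Qed.

Lemma UthK t (x : Vec R) : Uth (- t) (Uth t x) = x.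
Proof. by apply/funext => l; rewrite /Uth /diagop mulrA mulrN expiN mul1r. Qed.

Lemma rho_mul t (A B : Op R) : rho t (opmul A B) = opmul (rho t A) (rho t B).
Proof. by apply/funext => x; rewrite /rho /opmul UthK. Qed.

Lemma rho_ext t (A B : Op R) : op_eq A B -> op_eq (rho t A) (rho t B).
Proof. by move=> e x hx; rewrite /rho /opmul e //; apply: (good_Uth (- t)).1. Qed.

Lemma Uth0 (x : Vec R) : Uth 0 x = x.
Proof. by apply/funext => l; rewrite /Uth /diagop mulr0 expi0 mul1r. Qed.

Lemma rho0 (A : Op R) : rho 0 A = A.
Proof. by apply/funext => x; rewrite /rho /opmul oppr0 !Uth0. Qed.

Lemma decomp b : in_calB x1 b -> exists s, allIn s /\ forall t, op_eq (rho t b) (opsum s t).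
Proof.
rewrite /in_calB => h; elim: h => {b} [T hT|A B hA [s1 [a1 e1]] hB [s2 [a2 e2]]|c A hA [s [a e]]|A B hA [s1 [a1 e1]] hB [s2 [a2 e2]]|A B hA [s [a e]] eAB].
- case: hT => [->|[->|[chi [hchi ->]]]].
  + exists [:: (1, @shiftV R)]; split; first by move=> p /= [<-|//]; apply: ga_base; left.
    move=> t x _; apply/funext => l; rewrite /opsum big_cons big_nil addr0 /rho /opmul /Uth /diagop /shiftV /=.
    rewrite mulrA -expiD; congr (expi _ * _); rewrite intrB; ring.
  + exists [:: (-1, @shiftVinv R)]; split; first by move=> p /= [<-|//]; apply: ga_base; right; left.
    move=> t x _; apply/funext => l; rewrite /opsum big_cons big_nil addr0 /rho /opmul /Uth /diagop /shiftVinv /=.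
    rewrite mulrA -expiD; congr (expi _ * _); rewrite intrD; ring.
  + exists [:: (0, Mop x1 chi)]; split.
      by move=> p /= [<-|//]; apply: ga_base; right; right; exists chi.
    move=> t x _; apply/funext => l; rewrite /opsum big_cons big_nil addr0 /rho /opmul /Uth /Mop /diagop /=.
    rewrite [0%:~R]/= mul0r expi0 mul1r mulrCA; congr (_ * _); rewrite mulrA -expiD mulrN subrr expi0 mul1r //.
- exists (s1 ++ s2); split.
    by move=> p hp; case: (In_cat hp) => h; [apply: a1 | apply: a2].
  by move=> t x hx; rewrite rho_add opsum_cat /opadd (e1 t x hx) (e2 t x hx).
- exists [seq (p.1, opscale c p.2) | p <- s]; split.
    by move=> p hp; case: (In_map hp) => q [hq ->]; apply: ga_scale; apply: a.
  move=> t x hx; rewrite rho_scale /opscale (e t x hx); apply/funext => k.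
  by rewrite /opsum big_map mulr_sumr; apply: eq_bigr => p _ /=; rewrite mulrCA.
- exists (mulpairs s1 s2); split; first exact: allIn_mulpairs.
  move=> t x hx; rewrite rho_mul /opmul.
  have g2 : forall q, List.In q s2 -> inl2 (q.2 x) by move=> q hq; apply: (calB_good (a2 q hq)).1.
  have hy : inl2 (opsum s2 t x) by apply: inl2_big.
  rewrite (e2 t x hx) (e1 t _ hy).
  apply/funext => k; rewrite /opsum.
  elim: s1 a1 {e1 hA} => [|p s1 IH] a1; first by rewrite !big_nil.
  rewrite big_cons /= big_cat IH; last by move=> q hq; apply: a1; right.
  congr (_ + _); rewrite big_map.
  rewrite (@lin_big R p.2 _ s2 (fun q => expi (q.1%:~R * t)) (fun q => q.2 x)) //; last exact: (calB_good (a1 p (or_introl erefl))).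
  rewrite mulr_sumr; apply: eq_bigr => q _ /=.
  by rewrite /opmul mulrA -expiD intrD mulrDl.
- exists s; split => // t x hx; rewrite -(e t x hx).
  by apply: esym; apply: rho_ext.
Qed.
End C2.
Section E.
Variable R : realType.

Lemma sqn0 : sqn (fun _ : int => 0%R : Cx R) = 0%E.
Proof. by rewrite /sqn esum1 // => k _; rewrite sqmod0. Qed.

Lemma sqmodN (z : Cx R) : sqmod (- z)%R = sqmod z.
Proof. by case: z => a b; rewrite /sqmod /= !sqrrN. Qed.

Lemma le_absz_sum (s : seq int) (f : int -> nat) k : k \in s -> (f k <= \sum_(j <- s) f j)%N.
Proof.
elim: s => [|j s IH] //; rewrite inE big_cons => /orP [/eqP ->|/IH h]; first exact: leq_addr.
by apply: leq_trans h _; exact: leq_addl.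
Qed.

Lemma final_bound (I : Type) (P : seq I) (q : I -> int) (C : I -> Vec R) :
  (forall i, List.In i P -> inl2 (C i)) -> forall eps : R, (0 < eps)%R -> exists K : nat,
  forall M N : nat, (K <= M)%N -> (K <= N)%N ->
  (sqn (fun k => (\sum_(i <- P) (if (- (M%:Z) <= k - q i <= N%:Z) then 0 else - C i k))%R) <= eps%:E)%E.
Proof.
elim: P => [|i P IH] hC eps e0.
  exists 0%N => M N _ _.
  rewrite (_ : (fun k => _) = fun _ => (0%R : Cx R)); first by rewrite sqn0 lee_fin ltW.
  by apply/funext => k; rewrite big_nil.
have e4 : (0 < eps / 4)%R by rewrite divr_gt0.
have [K1 hK1] := IH (fun j hj => hC j (or_intror hj)) _ e4.
have u0 : forall k, (0 <= sqmod (C i k))%R by move=> k; exact: sqmod_ge0.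
have [s hs] := esum_tail u0 (hC i (or_introl erefl)) e4.
exists (maxn K1 (\sum_(k <- s) `|k - q i|%N)) => M N hM hN.
rewrite (_ : (fun k => _) = fun k => ((if (- (M%:Z) <= k - q i <= N%:Z)%R then 0 else - C i k) +
   \sum_(j <- P) (if (- (M%:Z) <= k - q j <= N%:Z)%R then 0 else - C j k))%R); last first.
  by apply/funext => k; rewrite big_cons.
apply: (le_trans (sqn_add _ _)).
have h1 : (sqn (fun k => (if (- (M%:Z) <= k - q i <= N%:Z) then 0 else - C i k)%R) <= ((eps / 4)%R)%:E)%E.
  apply: hs.
    move=> k; rewrite sqmod_ge0 /=; case: ifP => _; first by rewrite sqmod0.
    by rewrite sqmodN.
  move=> k ks; have := le_absz_sum (fun j => `|j - q i|%N) ks => hk.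
  have hKM : (`|k - q i| <= M)%N.
    by apply: leq_trans hk _; apply: leq_trans hM; exact: leq_maxr.
  have hKN : (`|k - q i| <= N)%N.
    by apply: leq_trans hk _; apply: leq_trans hN; exact: leq_maxr.
  suff hc : (- (M%:Z) <= k - q i <= N%:Z)%R by rewrite /= hc sqmod0.
  lia.
have h2 := hK1 M N (leq_trans (leq_maxl _ _) hM) (leq_trans (leq_maxl _ _) hN).
have two0 : (0 <= 2%:E :> \bar R)%E by rewrite lee_fin.
apply: (le_trans (leeD (lee_wpmul2l two0 h1) (lee_wpmul2l two0 h2))).
by rewrite -!EFinM -EFinD lee_fin; lra.
Qed.
End E.
Section F.
Variable R : realType.
Variable G : topologicalZmodType.
Variable x1 : G.
Variable d : Op R -> Op R.
Hypothesis hd : derivation x1 d.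

Lemma dgood a : in_calB x1 a -> good (d a).
Proof. by case: hd => _ hB _ _ _ ha; have [[h1 h2 _] _] := hB a ha; split. Qed.

Lemma d_opsum s t : allIn x1 s -> op_eq (d (opsum s t))
  (fun x k => \sum_(p <- s) expi (p.1%:~R * t) * d p.2 x k).
Proof.
case: hd => hresp _ hadd hscale _.
elim: s => [|p s IH] hs x hx.
  rewrite opsum_nil.
  have ha : in_calB x1 (opscale 0 (@shiftV R)) by apply: ga_scale; apply: ga_base; left.
  have e0 : op_eq (opscale 0 (@shiftV R)) (fun (x : Vec R) (k : int) => 0).
    by move=> y _; apply/funext => k; rewrite /opscale mul0r.
  have hV : in_calB x1 (@shiftV R) by apply: ga_base; left.
  rewrite -(hresp _ _ ha e0 x hx) (hscale _ _ hV x hx).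
  by apply/funext => k; rewrite /opscale mul0r big_nil.
have hp : in_calB x1 p.2 by apply: hs; left.
have hs' : allIn x1 s by move=> q hq; apply: hs; right.
rewrite opsum_cons (hadd _ _ (ga_scale _ hp) (calB_opsum _ hs') x hx).
rewrite /opadd (hscale _ _ hp x hx) (IH hs' x hx).
by apply/funext => k; rewrite big_cons.
Qed.

Lemma d_rho b s t : allIn x1 s -> op_eq (rho t b) (opsum s t) ->
  op_eq (d (rho t b)) (fun x k => \sum_(p <- s) expi (p.1%:~R * t) * d p.2 x k).
Proof.
move=> hs e x hx; case: hd => hresp _ _ _ _.
have e' : op_eq (opsum s t) (rho t b) by move=> y hy; rewrite e.
by rewrite -(hresp _ _ (calB_opsum t hs) e' x hx) (d_opsum t hs).
Qed.

Definition Ej (j : int) : Vec R := fun l => if l == j then 1 else 0.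

Lemma inl2_Ej j : inl2 (Ej j).
Proof.
apply: (@inl2_finsupp _ _ [:: j]) => k; rewrite inE /Ej => /negbTE -> //.
Qed.

Lemma sum_Ej (x : Vec R) (js : seq int) l : uniq js ->
  \sum_(j <- js) x j * Ej j l = if l \in js then x l else 0.
Proof.
elim: js => [|j js IH]; first by rewrite big_nil.
rewrite /= big_cons inE => /andP [nj u]; rewrite IH //.
rewrite /Ej; case: (eqVneq l j) => [->|_] /=; last by rewrite mulr0 add0r.
by rewrite (negbTE nj) mulr1 addr0.
Qed.

Lemma vec_decomp (x : Vec R) (js : seq int) : uniq js -> (forall k, k \notin js -> x k = 0) ->
  x = fun l => \sum_(j <- js) x j * Ej j l.
Proof.
move=> u h; apply/funext => l; rewrite sum_Ej //.
by case: ifP => // /negbT /h.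
Qed.

Lemma Uth_decomp (x : Vec R) (js : seq int) t : uniq js -> (forall k, k \notin js -> x k = 0) ->
  Uth t x = fun l => \sum_(j <- js) (expi (j%:~R * t) * x j) * Ej j l.
Proof.
move=> u h; apply/funext => l; rewrite /Uth /diagop {1}(vec_decomp u h) mulr_sumr.
apply: eq_bigr => j _; rewrite /Ej; case: (eqVneq l j) => [->|_]; first by rewrite !mulr1.
by rewrite !mulr0.
Qed.

Lemma big_In (I : Type) (r : seq I) (F F' : I -> Cx R) :
  (forall i, List.In i r -> F i = F' i) -> \sum_(i <- r) F i = \sum_(i <- r) F' i.
Proof.
elim: r => [|i r IH] h; first by rewrite !big_nil.
by rewrite !big_cons h ?IH //; [move=> j hj; apply: h; right | left].
Qed.

Fixpoint prodl (A : Type) (s : seq A) (js : seq int) : seq (A * int) :=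
  if s is p :: s' then [seq (p, j) | j <- js] ++ prodl s' js else [::].

Lemma big_prodl (A : Type) (s : seq A) (js : seq int) (F : A * int -> Cx R) :
  \sum_(pj <- prodl s js) F pj = \sum_(p <- s) \sum_(j <- js) F (p, j).
Proof.
elim: s => [|p s IH]; first by rewrite !big_nil.
by rewrite /= big_cat big_map IH big_cons.
Qed.

Lemma In_prodl (A : Type) (s : seq A) (js : seq int) pj : List.In pj (prodl s js) -> List.In pj.1 s.
Proof.
elim: s => [|p s IH] //= h0; case: (In_cat h0) => h; last by right; apply: IH.
by case: (In_map h) => j [_ ->]; left.
Qed.

End F.
Section F2.
Variable R : realType.
Variable G : topologicalZmodType.
Variable x1 : G.
Variable d : Op R -> Op R.
Hypothesis hd : derivation x1 d.

Lemma two_pi_neq0 : (2 * pi : R) != 0.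
Proof. by rewrite mulf_neq0 // gt_eqF // pi_gt0. Qed.

Lemma fourier_eq b s (hs : allIn x1 s) (e : forall t, op_eq (rho t b) (opsum s t))
  (x : Vec R) (js : seq int) (u : uniq js) (hsupp : forall k, k \notin js -> x k = 0) (n k : int) :
  fourier d n b x k = \sum_(pj <- prodl s js)
     (if n == k - pj.1.1 - pj.2 then x pj.2 * d pj.1.2 (@Ej R pj.2) k else 0).
Proof.
have hx : inl2 x := inl2_finsupp hsupp.
have hf : (fun t => expi (n%:~R * t) * rho_inv t (d (rho t b)) x k) =
  (fun t => \sum_(pj <- prodl s js) (x pj.2 * d pj.1.2 (@Ej R pj.2) k) *
             expi ((n + pj.1.1 + pj.2 - k)%:~R * t)).
  apply/funext => t.
  rewrite /rho_inv /opmul.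
  have hU : inl2 (Uth t x) := (good_Uth t).1 x hx.
  rewrite (d_rho hd hs (e t) hU) (Uth_decomp t u hsupp) {1}/Uth /diagop /=.
  rewrite (big_In (F' := fun p => expi (p.1%:~R * t) *
       \sum_(j <- js) (expi (j%:~R * t) * x j) * d p.2 (@Ej R j) k)); last first.
    move=> p hp; congr (_ * _).
    rewrite (@lin_big R (d p.2) _ js (fun j => expi (j%:~R * t) * x j) (@Ej R)) //.
      exact: (dgood hd (hs p hp)).
    by move=> j _; exact: inl2_Ej.
  rewrite big_prodl !mulr_sumr; apply: eq_bigr => p _.
  rewrite !mulr_sumr; apply: eq_bigr => j _ /=.
  rewrite (_ : (n + p.1 + j - k)%:~R * t = n%:~R * t + k%:~R * - t + p.1%:~R * t + j%:~R * t).
    by rewrite !expiD; ring.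
  by rewrite intrB !intrD; ring.
rewrite /fourier hf (cint_sum (prodl s js) (fun pj => x pj.2 * d pj.1.2 (@Ej R pj.2) k)
   (fun pj => n + pj.1.1 + pj.2 - k)) mulr_sumr.
apply: eq_bigr => pj _; rewrite cint_expi.
have -> : (n + pj.1.1 + pj.2 - k == 0) = (n == k - pj.1.1 - pj.2).
  by apply/eqP/eqP; lia.
case: ifP => _; last by rewrite !mulr0.
have h2 : (Complex ((2 * pi)^-1) 0 : Cx R) * Complex (2 * pi) 0 = 1.
  apply/eqP; rewrite eq_complex /= !mulr0 !mul0r subr0 addr0 mulVf ?two_pi_neq0 //.
  by rewrite !eqxx.
by rewrite mulrCA h2 mulr1.
Qed.

Lemma db_eq b s (hs : allIn x1 s) (e : forall t, op_eq (rho t b) (opsum s t))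
  (x : Vec R) (js : seq int) (u : uniq js) (hsupp : forall k, k \notin js -> x k = 0) (k : int) :
  d b x k = \sum_(pj <- prodl s js) x pj.2 * d pj.1.2 (@Ej R pj.2) k.
Proof.
have hx : inl2 x := inl2_finsupp hsupp.
have := d_rho hd hs (e 0) hx; rewrite rho0 => ->.
rewrite big_prodl; apply: big_In => p hp.
rewrite mulr0 expi0 mul1r {1}(vec_decomp u hsupp).
rewrite (@lin_big R (d p.2) _ js x (@Ej R)) //; first exact: (dgood hd (hs p hp)).
by move=> j _; exact: inl2_Ej.
Qed.

Lemma count_pos (N : nat) (w : int) (c : Cx R) :
  \sum_(0 <= n < N.+1) (if n%:Z == w then c else 0) = if (0 <= w <= N%:Z) then c else 0.
Proof.
elim: N => [|N IH].
  rewrite big_nat1; case: (ifP (0%:Z == w)) => /eqP h; case: (ifP (0 <= w <= 0%:Z)) => h' //; exfalso; lia.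
rewrite big_nat_recr //= IH.
case: (ifP (0 <= w <= N%:Z)) => h1; case: (ifP (N.+1%:Z == w)) => /eqP h2;
  case: (ifP (0 <= w <= N.+1%:Z)) => h3 //; rewrite ?addr0 ?add0r //; exfalso; lia.
Qed.

Lemma count_neg (M : nat) (w : int) (c : Cx R) :
  \sum_(1 <= n < M.+1) (if - n%:Z == w then c else 0) = if (- M%:Z <= w <= -1) then c else 0.
Proof.
elim: M => [|M IH]; first by rewrite big_geq //; case: ifP => // h; exfalso; lia.
rewrite big_nat_recr //= IH.
case: (ifP (- M%:Z <= w <= -1)) => h1; case: (ifP (- M.+1%:Z == w)) => /eqP h2;
  case: (ifP (- M.+1%:Z <= w <= -1)) => h3 //; rewrite ?addr0 ?add0r //; exfalso; lia.
Qed.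

Lemma piece (w : int) (M N : nat) (c : Cx R) :
  (if (0 <= w <= N%:Z) then c else 0) + (if (- M%:Z <= w <= -1) then c else 0) - c =
  if (- M%:Z <= w <= N%:Z) then 0 else - c.
Proof.
case: (ifP (0 <= w <= N%:Z)) => h1; case: (ifP (- M%:Z <= w <= -1)) => h2;
  case: (ifP (- M%:Z <= w <= N%:Z)) => h3; rewrite ?addr0 ?add0r ?subrr ?sub0r //; exfalso; lia.
Qed.
End F2.
Theorem proposition3p16 (R : realType) (G : topologicalZmodType) (x1 : G)
  (d : Op R -> Op R) :
  compact [set: G] -> hausdorff_space G -> infinite_set [set: G] ->
  closure (range (fun n : int => x1 *~ n)) = [set: G] ->
  derivation x1 d ->
  forall b : Op R, in_calB x1 b ->
  forall x : Vec R, (exists N : nat, forall k : int, (N%:Z < `|k|)%R -> x k = 0) ->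
  forall eps : R, 0 < eps -> exists K : nat, forall M N : nat, (K <= M)%N -> (K <= N)%N ->
    (sqn (fun k => (\sum_(0 <= n < N.+1) fourier d n%:Z b x k
                 + \sum_(1 <= n < M.+1) fourier d (- n%:Z) b x k
                 - d b x k)%R) <= eps%:E)%E.
Proof.
move=> _ _ _ _ hd b hb x [N0 hN] eps e0.
have [s [hs e]] := decomp hb.
pose js := [seq (i%:Z - N0%:Z) | i <- iota 0 (N0 + N0).+1].
have u : uniq js.
  rewrite map_inj_uniq ?iota_uniq // => i j /addIr /eqP; rewrite eqz_nat => /eqP.
  done.
have hsupp : forall k, k \notin js -> x k = 0.
  move=> k hk; apply: hN; rewrite ltNge; apply/negP => hk'; move/negP: hk; apply.
  have /andP [hk1 hk2] : (-(N0%:Z) <= k <= N0%:Z) by rewrite -ler_norml.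
  apply/mapP; exists (absz (k + N0%:Z)).
    rewrite mem_iota; apply/andP; split => //.
    rewrite -ltz_nat gez0_abs; last by rewrite -lerBlDr sub0r.
    rewrite add0n -addn1 !PoszD; lia.
  by rewrite gez0_abs ?addrK // -lerBlDr sub0r.
pose C := fun (pj : (int * Op R) * int) (k : int) => x pj.2 * d pj.1.2 (@Ej R pj.2) k.
have hC : forall pj, List.In pj (prodl s js) -> inl2 (C pj).
  move=> pj /In_prodl hp; apply: inl2_scale.
  by apply: (dgood hd (hs _ hp)).1; exact: inl2_Ej.
have [K hK] := @final_bound R _ (prodl s js) (fun pj => pj.1.1 + pj.2) C hC eps e0.
exists K => M N hM hN1.
have -> : (fun k => (\sum_(0 <= n < N.+1) fourier d n%:Z b x k
                 + \sum_(1 <= n < M.+1) fourier d (- n%:Z) b x k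
                 - d b x k)%R) =
  (fun k => \sum_(pj <- prodl s js)
       (if (- (M%:Z) <= k - (pj.1.1 + pj.2) <= N%:Z) then 0 else - C pj k))%R.
  apply/funext => k.
  rewrite (db_eq hd hs e u hsupp).
  under eq_bigr do rewrite (fourier_eq hd hs e u hsupp).
  rewrite exchange_big.
  under [X in _ + X - _]eq_bigr do rewrite (fourier_eq hd hs e u hsupp).
  rewrite [X in _ + X - _]exchange_big.
  rewrite -big_split -sumrB /=; apply: eq_bigr => pj _.
  rewrite count_pos count_neg piece.
  by rewrite (_ : k - (pj.1.1 + pj.2) = k - pj.1.1 - pj.2) //; rewrite opprD addrA.
exact: (hK M N hM hN1).
Qed.
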